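(* Let $X$ be a random variable with values in $[0,C]$, $r:[0,C]\to[E,D]$ measurable with $E\le0\le D$, $\lambda>0$, and let $c^*$ be the unique root on $\mathbb{R}_+$ of $\Phi(c)=\lambda\,\mathbb{E}[(r(X)-cX)_+]-c$. Let $\mathcal{E}\subset\{x\in[0,C]: r(x)\le c^*x\}$ be any (measurable) set, and define $r_{\mathcal E}(x)=r(x)\mathbf 1(x\notin\mathcal E)$. Then the profitability threshold associated with $r_{\mathcal E}$, i.e. the unique root on $\mathbb{R}_+$ of $c\mapsto\lambda\mathbb{E}[(r_{\mathcal E}(X)-cX)_+]-c$, equals $c^*$; equivalently, $$c^*=\lambda\,\mathbb{E}\big[(r_{\mathcal E}(X)-c^*X)_+\big].$$
   Context: $(z)_+=\max\{z,0\}$. *)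

(* Defs.v *)
From HB Require Import structures.
From mathcomp Require Import all_boot all_order all_algebra.
From mathcomp Require Import all_classical all_reals all_analysis.
Set Implicit Arguments. Unset Strict Implicit. Unset Printing Implicit Defensive.
Import Order.TTheory GRing.Theory Num.Theory.
Local Open Scope ring_scope.

Definition pospart {R : realType} (z : R) : R := Num.max z 0.

Definition Phi {d} {T : measurableType d} {R : realType} (P : probability T R)
  (X : T -> R) (r : R -> R) (lam c : R) : \bar R :=
  (lam%:E * 'E_P[fun w => pospart (r (X w) - c * X w)] - c%:E)%E.

Definition r_restr {R : realType} (r : R -> R) (Ecal : set R) (x : R) : R :=
  r x * \1_(~` Ecal) x.

(* Main.v *)
Require Import Defs.
From HB Require Import structures.
From mathcomp Require Import all_boot all_order all_algebra.
From mathcomp Require Import all_classical all_reals all_analysis.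
Import Order.TTheory GRing.Theory Num.Theory.
Local Open Scope classical_set_scope.
Local Open Scope ring_scope.

Lemma int_mono d (T : measurableType d) (R : realType) (mu : {measure set T -> \bar R})
  (f g : T -> \bar R) : (forall x, 0 <= f x)%E -> (forall x, f x <= g x)%E ->
  (\int[mu]_(x in setT) f x <= \int[mu]_(x in setT) g x)%E.
Proof.
move=> f0 fg; rewrite !ge0_integralTE//; last by move=> x; exact: le_trans (f0 x) (fg x).
apply: le_ereal_sup => _ [h hf <-]; exists h => //= x; exact: le_trans (hf x) (fg x).
Qed.

Lemma pos_mono (R : realType) (a b : R) : a <= b -> pospart a <= pospart b.
Proof. by move=> ab; rewrite /pospart ge_max !le_max ab lexx !orbT. Qed.

Lemma pos_ge0 (R : realType) (a : R) : 0 <= pospart a.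
Proof. by rewrite /pospart le_max lexx orbT. Qed.

Lemma pos_le0 (R : realType) (a : R) : a <= 0 -> pospart a = 0.
Proof. by move=> a0; rewrite /pospart max_r. Qed.

Lemma fin_root (R : realType) (lam c : R) (y : \bar R) : 0 < lam -> (0 <= y)%E ->
  (lam%:E * y - c%:E = 0)%E -> exists i, y = i%:E /\ lam * i = c.
Proof.
move=> l0; case: y => [i| |] //= _.
  by move=> /eqP; rewrite -EFinM -EFinB eqe subr_eq0 => /eqP h; exists i.
by rewrite gt0_muley ?lte_fin.
Qed.

Theorem lemma4p2 (d : measure_display) (T : measurableType d) (R : realType)
  (P : probability T R) (X : T -> R) (C E D lam cstar : R) (r : R -> R)
  (Ecal : set R) :
  measurable_fun setT X ->
  (forall w, 0 <= X w <= C) ->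
  measurable_fun `[0, C] r ->
  (forall x, 0 <= x <= C -> E <= r x <= D) ->
  E <= 0 -> 0 <= D ->
  0 < lam ->
  0 <= cstar ->
  Phi P X r lam cstar = 0%E ->
  (forall c, 0 <= c -> Phi P X r lam c = 0%E -> c = cstar) ->
  measurable Ecal ->
  Ecal `<=` [set x | 0 <= x <= C /\ r x <= cstar * x] ->
  forall c, 0 <= c -> (Phi P X (r_restr r Ecal) lam c = 0%E <-> c = cstar).
Proof.
move=> _ X0C _ _ _ _ l0 cs0 Phi0 _ _ EcalS c c0.
set I := fun c => 'E_P[fun w => pospart (r_restr r Ecal (X w) - c * X w)]%E.
have Ieq : I cstar = 'E_P[fun w => pospart (r (X w) - cstar * X w)]%E.
  rewrite /I unlock; apply: eq_integral => w _; congr (_ %:E).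
  rewrite /r_restr /indic; case: (pselect (Ecal (X w))) => [h|h].
    have [_ hr] := EcalS _ h.
    rewrite memNset ?mulr0 ?sub0r; last by move=> /(_ h).
    rewrite !pos_le0 // ?subr_le0 // oppr_le0 mulr_ge0 //.
    by case/andP: (X0C w).
  by rewrite mem_set ?mulr1.
have Imono : forall a b, a <= b -> (I b <= I a)%E.
  move=> a b ab; rewrite /I unlock; apply: int_mono.
    by move=> w; rewrite lee_fin pos_ge0.
  move=> w; rewrite lee_fin; apply: pos_mono; rewrite lerB // ler_wpM2r //.
  by case/andP: (X0C w).
have I0 : forall a, (0 <= I a)%E.
  by move=> a; apply: expectation_ge0 => w; exact: pos_ge0.
have PhiI : forall a, Phi P X (r_restr r Ecal) lam a = (lam%:E * I a - a%:E)%E by [].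
rewrite PhiI; split; last first.
  by move=> ->; rewrite Ieq.
move=> /(@fin_root _ _ _ _ l0 (I0 c)) [i [Ii li]].
move: Phi0; rewrite /Phi -Ieq => /(@fin_root _ _ _ _ l0 (I0 cstar)) [j [Ij lj]].
case: (lerP c cstar) => ccs.
  have := Imono _ _ ccs; rewrite Ii Ij lee_fin => ji.
  apply/eqP; rewrite eq_le ccs /= -li -lj ler_wpM2l // ltW //.
have := Imono _ _ (ltW ccs); rewrite Ii Ij lee_fin => ij.
suff : c <= cstar by rewrite leNgt ccs.
by rewrite -li -lj ler_wpM2l // ltW.
Qed.
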